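(* Let $X,Y$ be orbit-finite sets and let $F$ be an equivariant set of finitely supported functions $X\to Y$. Then $F$ is orbit-finite if and only if there is $k\in\mathbb N$ such that every function in $F$ is supported by at most $k$ atoms.
   Context: Fix a countably infinite set $\mathbb A$ of atoms; atom automorphisms are bijections of $\mathbb A$. For a set with an action of atom automorphisms, $x$ is supported by $\bar a\in\mathbb A^*$ if every automorphism fixing $\bar a$ pointwise fixes $x$; it is finitely supported if some finite tuple supports it, and a set is equivariant if it is mapped to itself by all automorphisms. Automorphisms act on functions by $\pi(f)=\pi\circ f\circ\pi^{-1}$. A subset $Y$ is orbit-finite if all its elements are finitely supported and for some tuple $\bar a$ it is a union of finitely many orbits of the group of automorphisms fixing $\bar a$ pointwise. ''Supported by at most $k$ atoms'' means supported by some tuple of length at most $k$. *)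

(* Defs.v *)
From Stdlib Require Import List Arith.
Import ListNotations.

(** Atoms: the countably infinite set [nat].  Atom automorphisms:
    bijections of [nat], given with their inverse. *)
Record perm : Type := Perm {
  pfun :> nat -> nat;
  pinv : nat -> nat;
  pinvK : forall a, pinv (pfun a) = a;
  pfunK : forall a, pfun (pinv a) = a }.

Definition perm_id : perm := @Perm (fun a => a) (fun a => a)
  (fun _ => eq_refl) (fun _ => eq_refl).

Definition perm_comp (p q : perm) : perm.
Proof.
  refine (@Perm (fun a => p (q a)) (fun a => pinv q (pinv p a)) _ _).
  - intro a; rewrite pinvK; apply pinvK.
  - intro a; rewrite pfunK; apply pfunK.
Defined.

Definition perm_inv (p : perm) : perm :=
  @Perm (pinv p) (pfun p) (pfunK p) (pinvK p).

Record gset : Type := GSet {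
  carrier :> Type;
  act : perm -> carrier -> carrier;
  act_id : forall x, act perm_id x = x;
  act_comp : forall p q x, act (perm_comp p q) x = act p (act q x) }.

Definition fixes_tuple (abar : list nat) (p : perm) : Prop :=
  forall a, In a abar -> p a = a.

Section Nominal.
Context {T : Type} (actT : perm -> T -> T).

Definition supports (abar : list nat) (x : T) : Prop :=
  forall p : perm, fixes_tuple abar p -> actT p x = x.

Definition fin_supp (x : T) : Prop := exists abar, supports abar x.

Definition supp_le (k : nat) (x : T) : Prop :=
  exists abar, length abar <= k /\ supports abar x.

Definition equivariant (S : T -> Prop) : Prop :=
  forall (p : perm) (x : T), S (actT p x) <-> S x.

(** Orbit-finite subset: all elements finitely supported, and for some
    tuple [abar] it is the union of the finitely many orbits (of the
    group of automorphisms fixing [abar] pointwise) of the elements of a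
    finite list [reps]. *)
Definition orbit_finite (S : T -> Prop) : Prop :=
  (forall x, S x -> fin_supp x) /\
  exists (abar : list nat) (reps : list T),
    forall x, S x <->
      exists r p, In r reps /\ fixes_tuple abar p /\ x = actT p r.
End Nominal.

Definition fun_act (X Y : gset) (p : perm) (f : X -> Y) : X -> Y :=
  fun x => act Y p (f (act X (perm_inv p) x)).

(* Main.v *)
Require Import Defs.
From Stdlib Require Import List Arith.
From Stdlib Require Import Lia Classical FunctionalExtensionality ProofIrrelevance.
Import ListNotations.

Lemma perm_ext (p q : perm) : (forall a, p a = q a) -> p = q.
Proof.
  intros H. destruct p as [f fi fK1 fK2], q as [g gi gK1 gK2]; simpl in *.
  assert (f = g) by (apply functional_extensionality; exact H). subst g.
  assert (fi = gi).
  { apply functional_extensionality; intro a.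
    rewrite <- (gK1 (fi a)). rewrite fK2. reflexivity. }
  subst gi. f_equal; apply proof_irrelevance.
Qed.

Definition swapf (a b x : nat) : nat :=
  if Nat.eq_dec x a then b else if Nat.eq_dec x b then a else x.
Lemma swapf_inv a b x : swapf a b (swapf a b x) = x.
Proof.
  unfold swapf.
  destruct (Nat.eq_dec x a); destruct (Nat.eq_dec x b);
  repeat (destruct Nat.eq_dec); subst; congruence.
Qed.
Definition swap a b : perm := Perm (swapf a b) (swapf a b) (swapf_inv a b) (swapf_inv a b).

Section G.
Variable Z : gset.
Lemma act_ext (p q : perm) (z : Z) : (forall a, p a = q a) -> act Z p z = act Z q z.
Proof. intro H; rewrite (perm_ext p q H); reflexivity. Qed.
Lemma act_invK (p : perm) (z : Z) : act Z (perm_inv p) (act Z p z) = z.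
Proof.
  rewrite <- act_comp. transitivity (act Z perm_id z); [|apply act_id].
  apply act_ext. intro a; simpl; apply pinvK.
Qed.
Lemma supports_incl (s s' : list nat) (z : Z) : incl s s' -> supports (act Z) s z -> supports (act Z) s' z.
Proof. intros Hi Hs p Hp; apply Hs; intros a Ha; apply Hp; apply Hi; auto. Qed.
Lemma fixes_inv (s : list nat) (p : perm) : fixes_tuple s p -> fixes_tuple s (perm_inv p).
Proof.
  intros H a Ha; simpl. transitivity (pinv p (p a)).
  rewrite (H a Ha); reflexivity. apply pinvK.
Qed.
Lemma supports_act (s : list nat) (p : perm) (z : Z) : supports (act Z) s z -> supports (act Z) (map p s) (act Z p z).
Proof.
  intros Hs q Hq.
  rewrite <- act_comp.
  transitivity (act Z (perm_comp p (perm_comp (perm_inv p) (perm_comp q p))) z).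
  - apply act_ext. intro a. simpl. rewrite pfunK. reflexivity.
  - rewrite act_comp. f_equal. apply Hs. intros a Ha. simpl.
    rewrite Hq by (apply in_map; exact Ha). apply pinvK.
Qed.
Lemma act_agree (s : list nat) (p q : perm) (z : Z) : supports (act Z) s z -> (forall a, In a s -> p a = q a) ->
  act Z p z = act Z q z.
Proof.
  intros Hs H.
  transitivity (act Z q (act Z (perm_comp (perm_inv q) p) z)).
  - rewrite <- act_comp; apply act_ext; intro a; simpl; rewrite pfunK; reflexivity.
  - f_equal. apply Hs. intros a Ha. simpl. rewrite H by assumption. apply pinvK.
Qed.
Lemma common_supp (l : list Z) : (forall z, In z l -> fin_supp (act Z) z) ->
  exists s, forall z, In z l -> supports (act Z) s z.
Proof.
  induction l as [|z l IH]; intros H.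
  - exists []. intros z [].
  - destruct IH as [s2 H2]. intros y Hy; apply H; right; auto.
    destruct (H z (or_introl eq_refl)) as [s1 H1].
    exists (s1 ++ s2). intros y [<-|Hy].
    + apply supports_incl with s1; auto. intros a Ha; apply in_or_app; auto.
    + apply supports_incl with s2; auto. intros a Ha; apply in_or_app; auto.
Qed.
End G.

Lemma inv_comp (p q : perm) : perm_inv (perm_comp p q) = perm_comp (perm_inv q) (perm_inv p).
Proof. apply perm_ext; intro a; reflexivity. Qed.

Definition FunG (X Y : gset) : gset.
Proof.
  refine (@GSet (X -> Y) (fun_act X Y) _ _).
  - intro f; apply functional_extensionality; intro x; unfold fun_act.
    rewrite (act_ext X (perm_inv perm_id) perm_id x (fun _ => eq_refl)), !act_id.
    reflexivity.
  - intros p q f; apply functional_extensionality; intro x; unfold fun_act.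
    rewrite inv_comp, !act_comp. reflexivity.
Defined.

Lemma fun_supp_val (X Y : gset) D (g : X -> Y) (s : list nat) (x : X) :
  supports (fun_act X Y) D g -> supports (act X) s x -> supports (act Y) (D ++ s) (g x).
Proof.
  intros Hg Hx p Hp.
  assert (E : fun_act X Y p g = g) by (apply Hg; intros a Ha; apply Hp; apply in_or_app; left; auto).
  assert (Ex : act X (perm_inv p) x = x)
    by (apply Hx; apply fixes_inv; intros a Ha; apply Hp; apply in_or_app; right; auto).
  assert (H := f_equal (fun h => h x) E). simpl in H. unfold fun_act in H.
  rewrite Ex in H. exact H.
Qed.

Lemma fun_equiv (X Y : gset) D (g : X -> Y) (p : perm) (x : X) :
  supports (fun_act X Y) D g -> fixes_tuple D p -> g (act X p x) = act Y p (g x).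
Proof.
  intros Hg Hp. assert (H := f_equal (fun h => h (act X p x)) (Hg p Hp)).
  simpl in H. unfold fun_act in H. rewrite act_invK in H. symmetry; exact H.
Qed.

Lemma pigeon (M n : nat) (L : list nat) : length L <= n ->
  exists g, M <= g < M + S n /\ ~ In g L.
Proof.
  intros HL. apply NNPP; intro Hc.
  assert (Hi : incl (seq M (S n)) L).
  { intros a Ha. apply in_seq in Ha. apply NNPP; intro Hn. apply Hc. exists a. split; [lia|exact Hn]. }
  pose proof (NoDup_incl_length (seq_NoDup (S n) M) Hi) as H.
  rewrite length_seq in H. lia.
Qed.

Lemma fresh (K : list nat) (M : nat) (HK : forall a, In a K -> a < M) :
  forall Sl, exists s : perm, fixes_tuple K s /\
    forall a, In a Sl -> In (s a) K \/ (M <= s a < M + length Sl).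
Proof.
  induction Sl as [|b Sl IH].
  - exists perm_id. split. intros a _; reflexivity. intros a [].
  - destruct IH as [s [Hs1 Hs2]].
    destruct (classic (In (s b) K \/ (M <= s b < M + S (length Sl)))) as [Hb|Hb].
    + exists s. split; auto. intros a [<-|Ha]; simpl; auto.
      destruct (Hs2 a Ha); [left|right]; auto; lia.
    + destruct (pigeon M (length Sl) (map s Sl)) as [g [Hg1 Hg2]].
      { rewrite length_map; lia. }
      exists (perm_comp (swap (s b) g) s). split.
      * intros a Ha. simpl. rewrite (Hs1 a Ha). unfold swapf.
        destruct (Nat.eq_dec a (s b)) as [e|ne].
        { exfalso; apply Hb; left; rewrite <- e; exact Ha. }
        destruct (Nat.eq_dec a g) as [e|ne']; [specialize (HK a Ha); lia | reflexivity].
      * intros a [<-|Ha]; simpl; unfold swapf.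
        -- destruct (Nat.eq_dec (s b) (s b)); [|congruence]. right; lia.
        -- destruct (Nat.eq_dec (s a) (s b)) as [e|ne].
           { exfalso; apply Hb; rewrite <- e; destruct (Hs2 a Ha); [left|right]; auto; lia. }
           destruct (Nat.eq_dec (s a) g) as [e|ne'].
           { exfalso; apply Hg2; rewrite <- e; apply in_map; exact Ha. }
           destruct (Hs2 a Ha); [left|right]; auto. lia.
Qed.

Lemma choose_list {C A : Type} (P : C -> A -> Prop) (L : list C) :
  exists R : list A, (forall a, In a R -> exists c, In c L /\ P c a) /\
    (forall c, In c L -> (exists a, P c a) -> exists a, In a R /\ P c a).
Proof.
  induction L as [|c L [R [H1 H2]]].
  - exists []. split. intros a []. intros c [].
  - destruct (classic (exists a, P c a)) as [[a Ha]|Hn].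
    + exists (a :: R). split.
      * intros x [<-|Hx]. exists c; split; [left|]; auto.
        destruct (H1 x Hx) as [c' [? ?]]; exists c'; split; [right|]; auto.
      * intros c' [<-|Hc'] He. exists a; split; [left|]; auto.
        destruct (H2 c' Hc' He) as [x [? ?]]; exists x; split; [right|]; auto.
    + exists R. split.
      * intros x Hx; destruct (H1 x Hx) as [c' [? ?]]; exists c'; split; [right|]; auto.
      * intros c' [<-|Hc'] He. contradiction. apply H2; auto.
Qed.

Fixpoint tuples (A : list nat) (n : nat) : list (list nat) :=
  match n with 0 => [[]] | S n => flat_map (fun a => map (cons a) (tuples A n)) A end.
Lemma tuples_in A t : (forall a, In a t -> In a A) -> In t (tuples A (length t)).
Proof.
  induction t as [|a t IH]; intros H; simpl. left; reflexivity.
  apply in_flat_map. exists a. split. apply H; left; auto. apply in_map. apply IH.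
  intros x Hx; apply H; right; auto.
Qed.

Lemma bound (K : list nat) : exists M, forall a, In a K -> a < M.
Proof.
  induction K as [|b K [M HM]]. exists 0; intros a [].
  exists (S b + M). intros a [<-|Ha]. lia. specialize (HM a Ha); lia.
Qed.

Lemma OF (Z : gset) (HZ : orbit_finite (act Z) (fun _ => True)) (D : list nat) :
  exists R : list Z, forall z, exists p z', fixes_tuple D p /\ In z' R /\ z = act Z p z'.
Proof.
  destruct HZ as [Hfs [c [reps Hreps]]].
  destruct (common_supp Z reps) as [s Hs].
  { intros r Hr. apply Hfs. exact I. }
  destruct (bound D) as [M HM].
  set (codes := list_prod reps (tuples (D ++ seq M (length s)) (length s))).
  destruct (choose_list (fun (cd : Z * list nat) (z' : Z) =>
     exists p : perm, map p s = snd cd /\ z' = act Z p (fst cd)) codes) as [R [_ HR]].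
  exists R. intro z.
  destruct (proj1 (Hreps z) I) as [r [p [Hr [_ Hz]]]].
  destruct (fresh D M HM (map p s)) as [sg [Hsg1 Hsg2]].
  set (q := perm_comp sg p).
  destruct (HR (r, map q s)) as [z' [Hz' [p' [Hp'1 Hp'2]]]].
  - apply in_prod; [exact Hr|].
    replace (length s) with (length (map q s)) at 2 by apply length_map.
    apply tuples_in.
    intros a Ha. apply in_map_iff in Ha as [b [<- Hb]]. apply in_or_app.
    destruct (Hsg2 (p b)) as [H|H]. apply in_map; auto.
    left; auto. right; apply in_seq. rewrite length_map in H. unfold q; simpl. lia.
  - exists (act Z q r). exists q. split; reflexivity.
  - exists (perm_inv sg), z'. split. apply fixes_inv; exact Hsg1. split; [exact Hz'|].
    rewrite Hz, Hp'2; simpl in *.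
    rewrite (act_agree Z s p' q r (Hs r Hr)).
    + unfold q; rewrite act_comp, act_invK; reflexivity.
    + apply map_ext_in_iff. exact Hp'1.
Qed.

Lemma fin_supp_elems (Z : gset) (HZ : orbit_finite (act Z) (fun _ => True)) (E : list nat) :
  exists L : list Z, forall z, supports (act Z) E z -> In z L.
Proof.
  destruct (OF Z HZ E) as [R HR]. exists R. intros z Hz.
  destruct (HR z) as [p [z' [Hp [Hz' ->]]]].
  rewrite <- (Hz (perm_inv p) (fixes_inv _ _ Hp)), act_invK; exact Hz'.
Qed.

Lemma codes_exist (X Y : gset) (HY : orbit_finite (act Y) (fun _ => True)) (D : list nat) :
  forall R : list X, (forall x, In x R -> fin_supp (act X) x) ->
  exists Codes : list (list Y), forall g : X -> Y, supports (fun_act X Y) D g -> In (map g R) Codes.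
Proof.
  induction R as [|x R IH]; intros HR.
  - exists [[]]. intros g _. left; reflexivity.
  - destruct IH as [C HC]. intros z Hz; apply HR; right; auto.
    destruct (HR x (or_introl eq_refl)) as [s Hs].
    destruct (fin_supp_elems Y HY (D ++ s)) as [LY HLY].
    exists (flat_map (fun y => map (cons y) C) LY).
    intros g Hg. simpl. apply in_flat_map. exists (g x). split.
    + apply HLY. apply fun_supp_val; auto.
    + apply in_map. apply HC; auto.
Qed.

Lemma fin_funs (X Y : gset) (HX : orbit_finite (act X) (fun _ => True))
  (HY : orbit_finite (act Y) (fun _ => True)) (D : list nat) :
  exists Lg : list (X -> Y), forall g, supports (fun_act X Y) D g -> exists g', In g' Lg /\ g = g'.
Proof.
  destruct (OF X HX D) as [R HR].
  destruct (codes_exist X Y HY D R) as [C HC].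
  { intros x _. destruct HX as [Hfs _]. apply Hfs; exact I. }
  destruct (choose_list (fun (cd : list Y) (g : X -> Y) =>
     supports (fun_act X Y) D g /\ map g R = cd) C) as [Lg [_ HLg]].
  exists Lg. intros g Hg.
  destruct (HLg (map g R) (HC g Hg) (ex_intro _ g (conj Hg eq_refl))) as [g' [Hg' [Hg'D Hmap]]].
  exists g'. split; auto.
  apply functional_extensionality. intro x.
  destruct (HR x) as [p [x' [Hp [Hx' ->]]]].
  rewrite (fun_equiv X Y D g p x' Hg Hp), (fun_equiv X Y D g' p x' Hg'D Hp).
  f_equal. symmetry. apply (proj1 map_ext_in_iff Hmap). exact Hx'.
Qed.

Theorem mainTheorem3 (X Y : gset)
  (HX : orbit_finite (act X) (fun _ : X => True))
  (HY : orbit_finite (act Y) (fun _ : Y => True))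
  (F : (X -> Y) -> Prop)
  (HFsupp : forall f, F f -> fin_supp (fun_act X Y) f)
  (HFeq : equivariant (fun_act X Y) F) :
  orbit_finite (fun_act X Y) F <->
  exists k : nat, forall f, F f -> supp_le (fun_act X Y) k f.
Proof.
  split.
  - intros [_ [abar [reps Hreps]]].
    destruct (common_supp (FunG X Y) reps) as [s Hs].
    { intros r Hr. apply HFsupp. apply Hreps. exists r, perm_id. split; [auto|split].
      intros a _; reflexivity. symmetry; apply (act_id (FunG X Y)). }
    exists (length s). intros f Hf.
    destruct (proj1 (Hreps f) Hf) as [r [p [Hr [_ ->]]]].
    exists (map p s). split. rewrite length_map; lia.
    apply (supports_act (FunG X Y)). apply Hs; auto.
  - intros [k Hk]. split; [exact HFsupp|].
    destruct (fin_funs X Y HX HY (seq 0 k)) as [Lg HLg].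
    destruct (choose_list (fun (g f : X -> Y) => F f /\ f = g) Lg) as [reps [H1 H2]].
    exists [], reps. intro f. split.
    + intro Hf. destruct (Hk f Hf) as [s [Hs1 Hs2]].
      destruct (fresh [] 0 (fun a H => match H with end) s) as [sg [_ Hsg]].
      set (f' := fun_act X Y sg f).
      assert (Hf' : supports (fun_act X Y) (seq 0 k) f').
      { apply (supports_incl (FunG X Y)) with (map sg s).
        - intros a Ha. apply in_map_iff in Ha as [b [<- Hb]]. apply in_seq.
          destruct (Hsg b Hb) as [[]|H]. lia.
        - apply (supports_act (FunG X Y)); auto. }
      destruct (HLg f' Hf') as [g' [Hg' Heq]].
      destruct (H2 g' Hg') as [r [Hr [HFr Hrg]]].
      { exists f'. split; auto. apply (proj2 (HFeq sg f)); exact Hf. }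
      exists r, (perm_inv sg). split; auto. split. intros a [].
      rewrite Hrg, <- Heq. unfold f'. symmetry; apply (act_invK (FunG X Y)).
    + intros [r [p [Hr [_ ->]]]]. destruct (H1 r Hr) as [g [_ [HFr _]]].
      apply (proj2 (HFeq p r)); exact HFr.
Qed.
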